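(* Let $m\in\mathbb{N}$ and $\mathbb{E}_m=\mathbb{E}^{\otimes_{\mathbb{R}}m}$. There exists an ordering $Q_m$ on the ring $\mathbb{E}_m$ (i.e. $\mathbb{E}_m=Q_m\sqcup\{0\}\sqcup(-Q_m)$, $Q_m+Q_m\subset Q_m$, $Q_mQ_m\subset Q_m$) such that $Q^{\otimes_{\mathbb{R}}m}\subseteq Q_m$, i.e. every simple tensor $u_1\otimes\cdots\otimes u_m$ with all $u_i\in Q$ lies in $Q_m$.
   Context: $\mathbb{E}=\bigcup_{n\geq1}\mathbb{R}((t^{1/n}))$ is the field of Puiseux series over $\mathbb{R}$. For $f\in\mathbb{E}\setminus\{0\}$ let $\mathfrak{c}(f)$ be the coefficient of its nonzero term of smallest $t$-exponent, and $Q=\{f\in\mathbb{E}:\mathfrak{c}(f)>0\}$ (an ordering of $\mathbb{E}$). Tensor products are over $\mathbb{R}$. *)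

(* Defs.v *)
From HB Require Import structures.
From mathcomp Require Import all_boot all_order all_algebra.
From mathcomp Require Import boolp classical_sets functions cardinality fsbigop.
From mathcomp Require Import reals.
Set Implicit Arguments. Unset Strict Implicit. Unset Printing Implicit Defensive.
Import Order.TTheory GRing.Theory Num.Theory.
Local Open Scope classical_set_scope.
Local Open Scope ring_scope.

(* Puiseux series over R: a series  sum_q f(q) t^q  is represented by its *)
(* coefficient function f : rat -> R.  It is a Puiseux series iff there   *)
(* are n >= 1 and N : int with  f q <> 0 -> q = k/n for some integer k>=N *)
(* (i.e. f lies in R((t^{1/n}))).                                         *)
Section Puiseux.
Variable R : realType.

Definition is_puiseux (f : rat -> R) : Prop :=
  exists n : nat, (0 < n)%N /\
    exists N : int, forall q : rat, f q != 0 ->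
      exists k : int, q = k%:~R / n%:R /\ N <= k.

Definition ps_zero : rat -> R := fun _ => 0.
Definition ps_one : rat -> R := fun q => if q == 0 then 1 else 0.
Definition ps_add (f g : rat -> R) : rat -> R := fun q => f q + g q.
Definition ps_opp (f : rat -> R) : rat -> R := fun q => - f q.
Definition ps_scale (a : R) (f : rat -> R) : rat -> R := fun q => a * f q.
(* Cauchy product; for Puiseux series the sum has finite support. *)
Definition ps_mul (f g : rat -> R) : rat -> R :=
  fun q => \sum_(a \in [set: rat]) (f a * g (q - a)).

Definition posQ (f : rat -> R) : Prop :=
  exists q : rat, 0 < f q /\ forall r : rat, r < q -> f r = 0.

End Puiseux.

(* The m-fold tensor power E^{(x)m} over R, as an R-algebra, given by its *)
(* universal property: a commutative R-algebra T with a map               *)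
(* iota : E^m -> T,  (u_1,..,u_m) |-> u_1 (x) ... (x) u_m, which is       *)
(* R-multilinear, multiplicative, sends (1,..,1) to 1, and is universal   *)
(* among R-multilinear maps from E^m into R-modules.                      *)
Definition tuple_upd (R : realType) (m : nat) (u : 'I_m -> rat -> R)
  (i : 'I_m) (f : rat -> R) : 'I_m -> rat -> R :=
  fun j => if j == i then f else u j.

Definition all_puiseux (R : realType) (m : nat) (u : 'I_m -> rat -> R) : Prop :=
  forall i, is_puiseux (u i).

Definition multilinear (R : realType) (m : nat) (W : lmodType R)
  (phi : ('I_m -> rat -> R) -> W) : Prop :=
  forall (u : 'I_m -> rat -> R) (i : 'I_m) (f g : rat -> R) (a : R),
    all_puiseux u -> is_puiseux f -> is_puiseux g ->
    phi (tuple_upd u i (ps_add (ps_scale a f) g))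
      = a *: phi (tuple_upd u i f) + phi (tuple_upd u i g).

Definition is_tensor_power (R : realType) (m : nat) (T : comAlgType R)
  (iota : ('I_m -> rat -> R) -> T) : Prop :=
  [/\ multilinear iota,
      (forall u v : 'I_m -> rat -> R, all_puiseux u -> all_puiseux v ->
         iota (fun j => ps_mul (u j) (v j)) = iota u * iota v),
      iota (fun _ => ps_one R) = 1 &
      (forall (W : lmodType R) (phi : ('I_m -> rat -> R) -> W),
         multilinear phi ->
         (exists g : {linear T -> W},
            forall u, all_puiseux u -> g (iota u) = phi u) /\
         (forall g1 g2 : {linear T -> W},
            (forall u, all_puiseux u -> g1 (iota u) = g2 (iota u)) ->
            forall x, g1 x = g2 x))].

Definition is_ordering (T : comRingType) (P : T -> Prop) : Prop :=
  [/\ (forall x : T, P x \/ x = 0 \/ P (- x)),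
      (forall x : T, ~ (P x /\ x = 0)),
      (forall x : T, ~ (P x /\ P (- x))),
      (forall x y : T, P x -> P y -> P (x + y)) &
      (forall x y : T, P x -> P y -> P (x * y))].

(* Main.v *)
From HB Require Import structures.
Require Import Defs.
From mathcomp Require Import all_boot all_order all_algebra.
From mathcomp Require Import boolp classical_sets functions cardinality fsbigop reals.
From mathcomp Require Import ring.
Set Implicit Arguments. Unset Strict Implicit. Unset Printing Implicit Defensive.
Import Order.TTheory GRing.Theory Num.Theory.
Local Open Scope ring_scope.
Section Puis.
Variable R : realType.
Local Notation F := (rat -> R).

Lemma puis_lat (n : nat) (k : int) (n2 : nat) : (0 < n2)%N -> (0 < n)%N ->
  (k%:~R / n%:R : rat) = (k * n2%:Z)%:~R / (n * n2)%:R.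
Proof.
move=> n2p np; rewrite intrM natrM.
have h1 : (n%:R : rat) != 0 by rewrite pnatr_eq0 -lt0n.
have h2 : (n2%:R : rat) != 0 by rewrite pnatr_eq0 -lt0n.
rewrite [X in _ = _ * X]invfM; field => //. by rewrite h1 h2.
Qed.

Lemma puis0 : is_puiseux (0 : F).
Proof. by exists 1%N; split => //; exists 0 => q; rewrite eqxx. Qed.

Lemma puisD (f g : F) : is_puiseux f -> is_puiseux g -> is_puiseux (f + g).
Proof.
move=> [n1 [n1p [N1 H1]]] [n2 [n2p [N2 H2]]].
exists (n1 * n2)%N; split; first by rewrite muln_gt0 n1p.
exists (Num.min (N1 * n2%:Z) (N2 * n1%:Z)) => q.
have -> : (f + g) q = f q + g q by [].
have [fq0|fq0] := eqVneq (f q) 0.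
  rewrite fq0 add0r => /H2 [k [-> Nk]].
  exists (k * n1%:Z); split; first by rewrite mulnC (@puis_lat n2 k n1 n1p n2p).
  rewrite ge_min; apply/orP; right; rewrite ler_pM2r //; by rewrite ltz_nat.
move=> _; have [k [-> Nk]] := H1 q fq0.
exists (k * n2%:Z); split; first by rewrite (@puis_lat n1 k n2 n2p n1p).
rewrite ge_min; apply/orP; left; rewrite ler_pM2r //; by rewrite ltz_nat.
Qed.

Lemma puisZ a (f : F) : is_puiseux f -> is_puiseux (ps_scale a f).
Proof.
move=> [n [np [N H]]]; exists n; split => //; exists N => q.
rewrite /ps_scale mulf_eq0 negb_or => /andP[_]; exact: H.
Qed.

Lemma puis_sum (I : Type) (r : seq I) (P : pred I) (G : I -> F) :
  (forall i, P i -> is_puiseux (G i)) -> is_puiseux (\sum_(i <- r | P i) G i).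
Proof.
move=> HG; apply: (big_ind (fun f => is_puiseux f)) => //.
- exact: puis0.
- move=> ? ?; exact: puisD.
Qed.

Lemma fsum_nz (g : rat -> R) : (\sum_(a \in [set: rat]) g a) != 0 -> exists a, g a != 0.
Proof.
move=> H; have [//|Hn] := pselect (exists a, g a != 0).
move/eqP: H; case; apply: fsbig1 => a _; apply/eqP; apply/negPn/negP => ga.
by apply: Hn; exists a.
Qed.

Lemma puisM (f g : F) : is_puiseux f -> is_puiseux g -> is_puiseux (ps_mul f g).
Proof.
move=> [n1 [n1p [N1 H1]]] [n2 [n2p [N2 H2]]].
exists (n1 * n2)%N; split; first by rewrite muln_gt0 n1p.
exists (N1 * n2%:Z + N2 * n1%:Z) => q /fsum_nz [a].
rewrite mulf_eq0 negb_or => /andP[/H1 [k1 [ea N1k]] /H2 [k2 [eb N2k]]].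
exists (k1 * n2%:Z + k2 * n1%:Z); split.
  have -> : q = a + (q - a) by rewrite addrC subrK.
  by rewrite eb ea intrD mulrDl -(@puis_lat n1 k1 n2 n2p n1p) [(n1 * n2)%N]mulnC -(@puis_lat n2 k2 n1 n1p n2p).
rewrite lerD // ler_pM2r //; by rewrite ltz_nat.
Qed.

Definition lead (f : F) (p : rat) := f p != 0 /\ forall r, r < p -> f r = 0.

Lemma lead_uniq f p p' : lead f p -> lead f p' -> p = p'.
Proof.
move=> [h1 h2] [h1' h2']; case: (ltgtP p p') => // H.
  by move: h1; rewrite h2' // eqxx.
by move: h1'; rewrite h2 // eqxx.
Qed.

Lemma lead_ex (f : F) : is_puiseux f -> (exists q, f q != 0) -> exists p, lead f p.
Proof.
move=> [n [np [N H]]] [q fq].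
have nR : (0 : rat) < n%:R by rewrite ltr0n.
pose P s := f ((N + s%:Z)%:~R / n%:R) != 0.
have exP : exists s, P s.
  have [k [ek Nk]] := H q fq; exists (absz (k - N)).
  by rewrite /P gez0_abs ?subr_ge0 // (addrC N) subrK -ek.
have [s0 Ps0 min0] := ex_minnP exP.
exists ((N + s0%:Z)%:~R / n%:R); split => // r lt_r.
apply/eqP; rewrite -[_ == _]negbK; apply/negP => fr.
have [k [ek Nk]] := H r fr.
have : (absz (k - N) >= s0)%N by apply: min0; rewrite /P gez0_abs ?subr_ge0 // (addrC N) subrK -ek.
move: lt_r; rewrite ek ltr_pM2r ?invr_gt0 // ltr_int => lt_k.
rewrite -lez_nat (gez0_abs (_ : 0 <= k - N)) ?subr_ge0 // lerBrDl; apply/negP; by rewrite -ltNge.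
Qed.

Lemma mul_lead (f g : F) a b : lead f a -> lead g b ->
  (forall r, r < a + b -> ps_mul f g r = 0) /\ ps_mul f g (a + b) = f a * g b.
Proof.
move=> [fa fl] [gb gl]; split.
  move=> r rlt; apply: fsbig1 => x _.
  have [xa|ax] := ltP x a; first by rewrite fl // mul0r.
  rewrite gl ?mulr0 //; rewrite ltrBlDr; apply: (lt_le_trans rlt).
  by rewrite addrC lerD2l.
rewrite /ps_mul -(fsbig_widen [set a] [set: rat]) //.
  by rewrite fsbig_set1 [a + b]addrC addrK.
move=> x [_ /= /eqP xa]; rewrite /=.
case: (ltgtP x a) xa => // H _.
  by rewrite fl // mul0r.
rewrite gl ?mulr0 //; by rewrite ltrBlDr [a + b]addrC ltrD2l.
Qed.

End Puis.

Lemma faddE (A : Type) (M : zmodType) (f g : A -> M) x : (f + g) x = f x + g x.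
Proof. by []. Qed.
Lemma foppE (A : Type) (M : zmodType) (f : A -> M) x : (- f) x = - f x.
Proof. by []. Qed.

Section Lex.
Variable m : nat.
Local Notation Pt := ('I_m -> rat).

Definition ltlex (q r : Pt) := exists i : 'I_m, q i < r i /\ forall j : 'I_m, (j < i)%N -> q j = r j.

Lemma ltlex_irr q : ~ ltlex q q.
Proof. by case=> i [qi _]; move: qi; rewrite ltxx. Qed.

Lemma ltlex_trans q r s : ltlex q r -> ltlex r s -> ltlex q s.
Proof.
move=> [i [qi hi]] [j [rj hj]].
case: (ltngtP i j) => [ij|ji|/val_inj ij].
- exists i; split; first by rewrite -(hj i ij).
  by move=> k ki; rewrite hi // hj // (ltn_trans ki ij).
- exists j; split; first by rewrite (hi j ji).
  by move=> k kj; rewrite hi ?hj // (ltn_trans kj ji).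
- subst j; exists i; split; first exact: lt_trans qi rj.
  by move=> k ki; rewrite hi ?hj.
Qed.

Lemma first_diff (q r : Pt) : q <> r -> exists i : 'I_m, q i != r i /\ forall j : 'I_m, (j < i)%N -> q j = r j.
Proof.
move=> qr.
have ex : exists s, [exists i : 'I_m, (val i == s) && (q i != r i)].
  have [[i qi]|H] := pselect (exists i, q i != r i).
    by exists (val i); apply/existsP; exists i; rewrite eqxx.
  by case: qr; apply/funext => i; apply/eqP/negPn/negP => hi; apply: H; exists i.
have [s /existsP[i /andP[/eqP si qi]] smin] := ex_minnP ex.
exists i; split => // j ji; apply/eqP/negPn/negP => qj.
suff : (s <= j)%N by rewrite -si leqNgt ji.
by apply: smin; apply/existsP; exists j; rewrite eqxx.
Qed.

Lemma ltlex_total q r : q <> r -> ltlex q r \/ ltlex r q.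
Proof.
move=> /first_diff [i [qi hi]]; case: (ltgtP (q i) (r i)) qi => // H _.
  by left; exists i.
by right; exists i; split => // j ji; rewrite hi.
Qed.

Lemma addptE (q r : Pt) i : (q + r) i = q i + r i. Proof. by []. Qed.

Lemma ltlex_addr q q' r : ltlex q q' -> ltlex (q + r) (q' + r).
Proof.
move=> [i [qi hi]]; exists i; split; first by rewrite !addptE ltrD2r.
by move=> j ji; rewrite !addptE hi.
Qed.

Lemma ltlex_addl q r r' : ltlex r r' -> ltlex (q + r) (q + r').
Proof.
move=> [i [qi hi]]; exists i; split; first by rewrite !addptE ltrD2l.
by move=> j ji; rewrite !addptE hi.
Qed.

Lemma ltlex_add q q' r r' : (q = q' \/ ltlex q q') -> (r = r' \/ ltlex r r') ->
  (ltlex q q' \/ ltlex r r') -> ltlex (q + r) (q' + r').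
Proof.
move=> [->|h1] [->|h2].
- by move=> [h|h]; case: (ltlex_irr h).
- by move=> _; exact: ltlex_addl.
- by move=> _; exact: ltlex_addr.
- by move=> _; apply: ltlex_trans (ltlex_addr _ h1) (ltlex_addl _ h2).
Qed.

Definition lexpos (R : realType) (F : Pt -> R) :=
  exists q, 0 < F q /\ forall r, ltlex r q -> F r = 0.

Lemma lexpos_lead (R : realType) (F : Pt -> R) p :
  lexpos F -> F p != 0 -> (forall r, ltlex r p -> F r = 0) -> 0 < F p.
Proof.
move=> [q [Fq Hq]] Fp Hp.
have [e|qp] := pselect (q = p); first by subst q.
case: (ltlex_total qp) => H.
  by move: Fq; rewrite Hp // ltxx.
by move: Fp; rewrite Hq // eqxx.
Qed.

Lemma lexpos_add (R : realType) (F G : Pt -> R) : lexpos F -> lexpos G -> lexpos (F + G).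
Proof.
move=> [q [Fq Hq]] [p [Gp Hp]].
have [e|qp] := pselect (q = p).
  subst p; exists q; split; first by rewrite faddE addr_gt0.
  by move=> r rq; rewrite faddE Hq // Hp // addr0.
case: (ltlex_total qp) => H.
  exists q; split; first by rewrite faddE Hp // addr0.
  by move=> r rq; rewrite faddE Hq // Hp ?addr0 //; exact: ltlex_trans rq H.
exists p; split; first by rewrite faddE Hq // add0r.
by move=> r rp; rewrite faddE Hp // Hq ?addr0 //; exact: ltlex_trans rp H.
Qed.

Lemma lexpos_opp (R : realType) (F : Pt -> R) : lexpos F -> lexpos (- F) -> False.
Proof.
move=> [q [Fq Hq]] [p [Gp Hp]].
have [e|qp] := pselect (q = p).
  by subst p; move: Gp; rewrite foppE oppr_gt0 ltNge (ltW Fq).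
case: (ltlex_total qp) => H.
  have := Hp _ H; rewrite foppE => /eqP; rewrite oppr_eq0 => /eqP Fq0.
  by move: Fq; rewrite Fq0 ltxx.
by move: Gp; rewrite foppE Hq // oppr0 ltxx.
Qed.

Lemma lexpos0 (R : realType) : lexpos (fun _ : Pt => (0 : R)) -> False.
Proof. by move=> [q [qi _]]; move: qi; rewrite ltxx. Qed.

Definition Gf (R : realType) (u : 'I_m -> rat -> R) : Pt -> R :=
  fun q => \prod_(i < m) u i (q i).

Lemma Gf_zero (R : realType) (u : 'I_m -> rat -> R) p q :
  (forall i x, x < p i -> u i x = 0) -> ltlex q p -> Gf u q = 0.
Proof.
move=> H [i [qi _]]; rewrite /Gf (bigD1 i) //= H // mul0r //.
Qed.

End Lex.

Lemma list_min (X : eqType) (Y : Type) (lt : Y -> Y -> Prop) (key : X -> Y) (s : seq X) :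
  (forall a b c, lt a b -> lt b c -> lt a c) ->
  (forall x y, x \in s -> y \in s -> x != y -> lt (key x) (key y) \/ lt (key y) (key x)) ->
  s != [::] -> exists2 x0, x0 \in s & forall x, x \in s -> x = x0 \/ lt (key x0) (key x).
Proof.
move=> trans tot; elim: s tot => // x s IH tot _.
have [->|sn] := eqVneq s [::].
  by exists x; rewrite ?inE // => y; rewrite inE => /eqP ->; left.
have [|y0 y0s Hy0] := IH _ sn.
  by move=> a b ha hb; apply: tot; rewrite inE ?ha ?hb orbT.
have [e|ne] := eqVneq x y0.
  exists y0; first by rewrite inE y0s orbT.
  by move=> z; rewrite inE => /orP[/eqP ->|/Hy0//]; left.
have y0in : y0 \in x :: s by rewrite inE y0s orbT.
have [h|h] := tot x y0 (mem_head _ _) y0in ne.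
  exists x; first exact: mem_head.
  move=> z; rewrite inE => /orP[/eqP ->|/Hy0 [->|hz]]; [by left|by right|].
  by right; exact: trans h hz.
exists y0; first by rewrite inE y0s orbT.
by move=> z; rewrite inE => /orP[/eqP ->|/Hy0//]; right.
Qed.

Section Ech.
Variable R : realType.
Local Notation F := (rat -> R).

Definition valid (bs : seq F) (os : seq rat) :=
  [/\ size bs = size os, uniq os &
      forall j, (j < size bs)%N -> is_puiseux bs`_j /\ lead bs`_j os`_j].

Definition comb (bs : seq F) (a : nat -> R) : F :=
  \sum_(j < size bs) ps_scale (a j) bs`_j.

Lemma ps_scaleDl x y (b : F) : ps_scale (x + y) b = ps_scale x b + ps_scale y b.
Proof. by apply/funext => z; rewrite /ps_scale faddE mulrDl. Qed.

Lemma ps_scale0 (b : F) : ps_scale 0 b = 0.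
Proof. by apply/funext => z; rewrite /ps_scale mul0r. Qed.

Lemma ps_scaleN1 (b : F) : ps_scale (-1) b = - b.
Proof. by apply/funext => z; rewrite /ps_scale foppE mulN1r. Qed.

Lemma puisN (f : F) : is_puiseux f -> is_puiseux (- f).
Proof. by move=> h; rewrite -ps_scaleN1; apply: puisZ. Qed.

Lemma puisB (f g : F) : is_puiseux f -> is_puiseux g -> is_puiseux (f - g).
Proof. by move=> hf hg; apply: puisD => //; apply: puisN. Qed.

Lemma comb0 bs : comb bs (fun _ => 0) = 0.
Proof. by rewrite /comb big1 // => j _; rewrite ps_scale0. Qed.

Lemma comb_delta bs (a : nat -> R) j c : (j < size bs)%N ->
  comb bs (fun i => a i + (if i == j then c else 0)) = comb bs a + ps_scale c bs`_j.
Proof.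
move=> js; rewrite /comb.
under eq_bigr => i _ do rewrite ps_scaleDl.
rewrite big_split /=; congr (_ + _).
rewrite (bigD1 (Ordinal js)) //= eqxx big1 ?addr0 // => i /negPf ni.
have -> : (i == j :> nat) = false by apply/negP => /eqP e; move: ni; rewrite -(inj_eq val_inj) /= e eqxx.
by rewrite ps_scale0.
Qed.

Lemma puis_comb bs a : (forall j, (j < size bs)%N -> is_puiseux bs`_j) -> is_puiseux (comb bs a).
Proof. move=> H; apply: puis_sum => j _; apply: puisZ; exact: H. Qed.

Lemma count_lt (a b : pred rat) (s : seq rat) :
  (forall x, a x -> b x) -> (exists2 x, x \in s & b x && ~~ a x) -> (count a s < count b s)%N.
Proof.
move=> ab; elim: s => [[x]//|y s IH [x]]; rewrite inE => /orP[/eqP ->{x}|xs] /andP[bx nax] /=.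
  rewrite (negPf nax) bx add0n add1n ltnS; apply: sub_count => z; exact: ab.
rewrite -addnS leq_add //; last by apply: IH; exists x => //; rewrite bx nax.
by case: (a y) (ab y) => //= ->.
Qed.

Lemma reduce bs os : valid bs os -> forall f, is_puiseux f ->
  exists a, (f - comb bs a = 0) \/ exists p, lead (f - comb bs a) p /\ p \notin os.
Proof.
move=> [sz uq hv].
suff H : forall k f, is_puiseux f ->
    (f = 0 \/ exists p, lead f p /\ (count (fun o : rat => (p <= o)%R) os <= k)%N) ->
    exists a, (f - comb bs a = 0) \/ exists p, lead (f - comb bs a) p /\ p \notin os.
  move=> f pf; apply: (H (size os)) => //.
  have [f0|fn0] := pselect (f = 0); first by left.
  right; have [|p lp] := lead_ex pf.
    apply/not_existsP => hn; apply: fn0; apply/funext => x.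
    by apply/eqP/negPn/negP => hx; apply: (hn x).
  by exists p; split => //; exact: count_size.
elim=> [|k IH] f pf.
  move=> hf; exists (fun _ => 0); rewrite comb0 subr0.
  case: hf => [->|[p [lp hc]]]; first by left.
  right; exists p; split => //; apply/negP => po.
  by move: hc; rewrite leqNgt -has_count => /hasPn /(_ p po); rewrite /= lexx.
case=> [f0|[p [lp hc]]].
  by exists (fun _ => 0); left; rewrite comb0 f0 subr0.
have [po|po] := boolP (p \in os); last first.
  by exists (fun _ => 0); right; exists p; rewrite comb0 subr0.
pose j := index p os.
have js : (j < size bs)%N by rewrite sz index_mem.
have ojp : os`_j = p by rewrite nth_index.
have [pbj [bj0 bjl]] : is_puiseux bs`_j /\ lead bs`_j p by rewrite -ojp; apply: hv.
pose c := f p / bs`_j p.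
pose f' := f - ps_scale c bs`_j.
have pf' : is_puiseux f' by apply: puisB => //; apply: puisZ.
have f'le : forall r, r <= p -> f' r = 0.
  move=> r; rewrite le_eqVlt => /orP[/eqP ->|rp].
    by rewrite /f' faddE foppE /ps_scale /c divfK // subrr.
  by rewrite /f' faddE foppE /ps_scale bjl // mulr0 subr0 (proj2 lp).
have [a ha] : exists a, (f' - comb bs a = 0) \/ exists p, lead (f' - comb bs a) p /\ p \notin os.
  apply: IH => //.
  have [f0|fn0] := pselect (f' = 0); first by left.
  right; have [|p' lp'] := lead_ex pf'.
    apply/not_existsP => hn; apply: fn0; apply/funext => x.
    by apply/eqP/negPn/negP => hx; apply: (hn x).
  exists p'; split => //.
  have pp' : p < p'.
    rewrite ltNge; apply/negP => /f'le; move: lp' => [/eqP ? _]; contradiction.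
  rewrite -ltnS; apply: leq_trans hc; apply: count_lt.
    by move=> x /= px; apply: le_trans px; apply: ltW.
  by exists p => //; rewrite lexx /= -ltNge.
exists (fun i => a i + (if i == j then c else 0)).
have -> : f - comb bs (fun i => a i + (if i == j then c else 0)) = f' - comb bs a.
  by rewrite comb_delta // /f' opprD addrA addrAC.
exact: ha.
Qed.

Lemma comb_rcons bs r (a : nat -> R) :
  comb (rcons bs r) a = comb bs a + ps_scale (a (size bs)) r.
Proof.
rewrite /comb size_rcons big_ord_recr /= nth_rcons ltnn eqxx; congr (_ + _).
by apply: eq_bigr => i _; rewrite nth_rcons ltn_ord.
Qed.

Lemma echelon (I : eqType) (s : seq I) (fs : I -> F) : (forall i, is_puiseux (fs i)) ->
  exists bs os, valid bs os /\ forall i, i \in s -> exists a, fs i = comb bs a.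
Proof.
move=> hfs; elim: s => [|i s [bs [os [[sz uq hv] hs]]]].
  by exists [::], [::]; split => //; split => // j.
have [a [r0|[p [lp po]]]] := reduce (And3 sz uq hv) (hfs i).
  exists bs, os; split => // k; rewrite inE => /orP[/eqP ->|/hs //].
  by exists a; apply/eqP; rewrite -subr_eq0 r0.
exists (rcons bs (fs i - comb bs a)), (rcons os p); split.
  split; first by rewrite !size_rcons sz.
    by rewrite rcons_uniq po.
  move=> j; rewrite size_rcons ltnS leq_eqVlt => /orP[/eqP ->|jl].
    rewrite !nth_rcons ltnn eqxx -sz ltnn eqxx; split => //.
    apply: puisB => //; apply: puis_comb => j0 jl0; exact: (proj1 (hv _ jl0)).
  by rewrite !nth_rcons jl -sz jl; apply: hv.
move=> k; rewrite inE => /orP[/eqP ->|/hs [a' ->]].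
  exists (fun j => if (j < size bs)%N then a j else 1).
  rewrite comb_rcons ltnn /ps_scale.
  have -> : comb bs (fun j => if (j < size bs)%N then a j else 1) = comb bs a.
    by apply: eq_bigr => j _; rewrite ltn_ord.
  apply/funext => x; rewrite faddE /= mul1r; by rewrite addrC subrK.
exists (fun j => if (j < size bs)%N then a' j else 0).
rewrite comb_rcons ltnn ps_scale0 addr0.
by apply: eq_bigr => j _; rewrite ltn_ord.
Qed.

End Ech.

Section Expand.
Variables (R : realType) (m : nat) (W : lmodType R).
Local Notation F := (rat -> R).
Variable phi : ('I_m -> F) -> W.
Hypothesis mlphi : multilinear phi.

Lemma upd_puis (u : 'I_m -> F) i f : all_puiseux u -> is_puiseux f -> all_puiseux (tuple_upd u i f).
Proof. by move=> hu hf j; rewrite /tuple_upd; case: eqP. Qed.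

Lemma ml_zero u i : all_puiseux u -> phi (tuple_upd u i 0) = 0.
Proof.
move=> hu; have := mlphi i 1 hu (@puis0 R) (@puis0 R).
have -> : ps_add (ps_scale 1 0) 0 = (0 : F).
  by apply/funext => x; rewrite /ps_add /ps_scale mulr0 addr0.
rewrite scale1r => /eqP; rewrite -subr_eq0 opprD addrA subrr sub0r oppr_eq0.
by move/eqP.
Qed.

Lemma ml_sum u i d (a : 'I_d -> R) (b : 'I_d -> F) :
  all_puiseux u -> (forall j, is_puiseux (b j)) ->
  phi (tuple_upd u i (\sum_(j < d) ps_scale (a j) (b j))) =
  \sum_(j < d) a j *: phi (tuple_upd u i (b j)).
Proof.
move=> hu hb; elim: d a b hb => [|d IH] a b hb.
  by rewrite !big_ord0 ml_zero.
rewrite !big_ord_recr /=.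
have -> : \sum_(j < d) ps_scale (a (widen_ord (leqnSn d) j)) (b (widen_ord (leqnSn d) j)) +
    ps_scale (a ord_max) (b ord_max) =
  ps_add (ps_scale (a ord_max) (b ord_max))
    (\sum_(j < d) ps_scale (a (widen_ord (leqnSn d) j)) (b (widen_ord (leqnSn d) j))).
  by rewrite addrC.
rewrite mlphi //; last by apply: puis_sum => j _; apply: puisZ.
by rewrite addrC IH.
Qed.

Variables (d : nat) (b : 'I_d -> F).
Hypothesis hb : forall j, is_puiseux (b j).

Definition Sk k (J : {ffun 'I_m -> option 'I_d}) : bool :=
  [forall i, (J i == None) == (k <= i)%N].
Definition mixJ (u : 'I_m -> F) (J : {ffun 'I_m -> option 'I_d}) : 'I_m -> F :=
  fun i => if J i is Some j then b j else u i.
Definition wJ (a : 'I_m -> 'I_d -> R) (J : {ffun 'I_m -> option 'I_d}) : R :=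
  \prod_i (if J i is Some j then a i j else 1).
Definition updJ (J : {ffun 'I_m -> option 'I_d}) i0 x : {ffun 'I_m -> option 'I_d} :=
  [ffun i => if i == i0 then x else J i].
Definition allS (J : {ffun 'I_m -> option 'I_d}) : bool := [forall i, J i != None].
Definition bJ (J : {ffun 'I_m -> option 'I_d}) : 'I_m -> F :=
  fun i => if J i is Some j then b j else 0.

Lemma mix_puis u J : all_puiseux u -> all_puiseux (mixJ u J).
Proof. by move=> hu i; rewrite /mixJ; case: (J i). Qed.

Lemma bJ_puis J : all_puiseux (bJ J).
Proof. by move=> i; rewrite /bJ; case: (J i) => [j|]; [apply: hb|apply: puis0]. Qed.

Lemma expand_k u a : all_puiseux u ->
  (forall i, u i = \sum_(j < d) ps_scale (a i j) (b j)) ->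
  forall k, (k <= m)%N -> phi u = \sum_(J | Sk k J) wJ a J *: phi (mixJ u J).
Proof.
move=> hu hua; elim=> [_|k IH km].
  rewrite (big_pred1 [ffun => None]); last first.
    move=> J; rewrite /Sk /=; apply/forallP/eqP => [H|->{J} i].
      by apply/ffunP => i; rewrite ffunE; move: (H i); rewrite leq0n eqb_id => /eqP.
    by rewrite ffunE.
  rewrite /wJ big1 ?scale1r; last by move=> i _; rewrite ffunE.
  by congr phi; apply/funext => i; rewrite /mixJ ffunE.
have km' : (k < m)%N by [].
pose i0 := Ordinal km'.
pose Fn J := wJ a J *: phi (mixJ u J).
rewrite (IH (ltnW km)).
have step : forall J, Sk k J ->
    wJ a J *: phi (mixJ u J) = \sum_(j < d) Fn (updJ J i0 (Some j)).
  move=> J /forallP /(_ i0); rewrite /= leqnn eqb_id => /eqP Ji0.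
  have -> : mixJ u J = tuple_upd (mixJ u J) i0 (\sum_(j < d) ps_scale (a i0 j) (b j)).
    apply/funext => i; rewrite /tuple_upd; case: eqP => [->|//].
    by rewrite /mixJ Ji0 hua.
have hm := mix_puis J hu; rewrite ml_sum // (@scaler_sumr R W (wJ a J)); apply: eq_bigr => j _.
  rewrite /Fn scalerA; congr (_ *: phi _).
    rewrite /wJ (bigD1 i0) //= [in RHS](bigD1 i0) //= Ji0 ffunE eqxx mul1r mulrC.
    congr (_ * _); apply: eq_bigr => i ni; by rewrite ffunE (negPf ni).
  apply/funext => i; rewrite /tuple_upd /mixJ ffunE; by case: eqP.
rewrite (eq_bigr _ step) exchange_big /=.
have step2 : forall J', Sk k.+1 J' -> Fn J' = \sum_(j < d) (if J' i0 == Some j then Fn J' else 0).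
  move=> J' /forallP /(_ i0); rewrite /= ltnn eqbF_neg.
  case E: (J' i0) => [j0|] // _.
  rewrite -big_mkcond /= (big_pred1 j0) // => j /=; by rewrite eq_sym.
rewrite (eq_bigr _ step2) [in RHS]exchange_big /=; apply: eq_bigr => j _.
rewrite -big_mkcondr.
rewrite [RHS](reindex_onto (fun J => updJ J i0 (Some j)) (fun J' => updJ J' i0 None)); last first.
  move=> J' /andP[_ /eqP H]; apply/ffunP => i; rewrite !ffunE; case: eqP => [->|//].
  by rewrite H.
apply: eq_bigl => J.
have hJ : (updJ J i0 (Some j)) i0 == Some j by rewrite ffunE eqxx.
rewrite hJ andbT.
have kk : forall i : 'I_m, i != i0 -> (k < i)%N = (k <= i)%N.
  move=> i nii0; rewrite ltn_neqAle; case: eqP => //= e; case/negP: nii0.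
  by apply/eqP/val_inj => /=; rewrite -e.
apply/idP/andP.
  move=> /forallP H; split.
    apply/forallP => i; rewrite ffunE; have [ii0|nii0] := eqVneq i i0.
      by subst i; rewrite /= ltnn.
    by rewrite kk //; exact: H.
  apply/eqP/ffunP => i; rewrite !ffunE; case: eqP => [->|//].
  by have := H i0; rewrite /= leqnn eqb_id => /eqP ->.
move=> [/forallP H1 /eqP H2]; apply/forallP => i.
have [ii0|nii0] := eqVneq i i0.
  subst i; have := congr1 (fun f : {ffun _ -> _} => f i0) H2; rewrite !ffunE eqxx /= => <-.
  by rewrite eqxx leqnn.
by have := H1 i; rewrite ffunE (negPf nii0) kk.
Qed.

Lemma expand u a : all_puiseux u ->
  (forall i, u i = \sum_(j < d) ps_scale (a i j) (b j)) ->
  phi u = \sum_(J | allS J) wJ a J *: phi (bJ J).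
Proof.
move=> hu hua; rewrite (expand_k hu hua (leqnn m)).
apply: eq_big => J.
  apply/forallP/forallP => H i; move: (H i); by rewrite leqNgt ltn_ord eqbF_neg.
move=> /forallP H; congr (_ *: phi _); apply/funext => i; rewrite /mixJ /bJ.
by move: (H i); rewrite leqNgt ltn_ord; case: (J i).
Qed.

End Expand.

Section Core.
Variables (R : realType) (m : nat).
Local Notation F := (rat -> R).

Lemma core_exp n (c : nat -> R) (us : nat -> 'I_m -> F) :
  (forall l, (l < n)%N -> all_puiseux (us l)) ->
  exists bs os, valid bs os /\
  exists E : {ffun 'I_m -> option 'I_(size bs)} -> R,
  forall (W : lmodType R) (phi : ('I_m -> F) -> W), multilinear phi ->
    \sum_(l < n) c l *: phi (us l) =
    \sum_(J | allS J) E J *: phi (bJ (fun j : 'I_(size bs) => bs`_j) J).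
Proof.
move=> hus.
pose fs (x : 'I_n * 'I_m) := us x.1 x.2.
have hfs : forall x, is_puiseux (fs x) by move=> [l i]; apply: hus.
have [bs [os [val hs]]] := echelon (enum [set: ('I_n * 'I_m)%type]) hfs.
have hs' : forall x : 'I_n * 'I_m, exists a, fs x = comb bs a.
  by move=> x; apply: hs; rewrite mem_enum inE.
have [A hA] := choice hs'.
case: (val) => sz uq hv.
have hb : forall j : 'I_(size bs), is_puiseux bs`_j by move=> j; exact: (proj1 (hv j (ltn_ord j))).
exists bs, os; split => //.
exists (fun J => \sum_(l < n) c l * wJ (fun i (j : 'I_(size bs)) => A (l, i) j) J).
move=> W phi mlphi.
have ex : forall l : 'I_n, phi (us l) = \sum_(J | allS J)
    wJ (fun i (j : 'I_(size bs)) => A (l, i) j) J *: phi (bJ (fun j : 'I_(size bs) => bs`_j) J).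
  move=> l; apply: (expand mlphi hb); first exact: hus.
  by move=> i; rewrite [LHS](hA (l, i)).
under eq_bigr => l _ do rewrite ex scaler_sumr.
rewrite exchange_big /=; apply: eq_bigr => J _; rewrite scaler_suml.
by apply: eq_bigr => l _; rewrite scalerA.
Qed.

End Core.

Section Key.
Variables (R : realType) (m : nat).
Local Notation F := (rat -> R).
Local Notation GW := (('I_m -> rat) -> R^o).
Variables (bs : seq F) (os : seq rat).
Hypothesis hval : valid bs os.
Local Notation d := (size bs).
Local Notation b := (fun j : 'I_d => bs`_j).
Local Notation Ft := {ffun 'I_m -> option 'I_d}.

Definition oJ (J : Ft) : 'I_m -> rat := fun i => if J i is Some j then os`_j else 0.

Lemma bJ_lead (J : Ft) i : allS J -> lead (bJ b J i) (oJ J i).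
Proof.
case: hval => sz uq hv /forallP /(_ i); rewrite /bJ /oJ; case: (J i) => // j _.
exact: (proj2 (hv j (ltn_ord j))).
Qed.

Lemma bJ_supp (J : Ft) i x : x < oJ J i -> bJ b J i x = 0.
Proof.
case: hval => sz uq hv; rewrite /bJ /oJ; case: (J i) => // j.
exact: (proj2 (proj2 (hv j (ltn_ord j)))).
Qed.

Lemma oJ_inj (J J' : Ft) : allS J -> allS J' -> oJ J = oJ J' -> J = J'.
Proof.
case: hval => sz uq hv /forallP H /forallP H' e; apply/ffunP => i.
have := congr1 (fun f => f i) e; rewrite /oJ.
move: (H i) (H' i); case: (J i) => // j; case: (J' i) => // j' _ _.
have js : (j < size os)%N by rewrite -sz.
have js' : (j' < size os)%N by rewrite -sz.
move/eqP; rewrite nth_uniq // => /eqP ej.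
by congr Some; apply: val_inj.
Qed.

Lemma GbJ_nz (J : Ft) : allS J -> Gf (bJ b J) (oJ J) != 0.
Proof.
move=> hJ; rewrite /Gf prodf_seq_neq0; apply/allP => i _ /=.
exact: (proj1 (bJ_lead i hJ)).
Qed.

Lemma sum_evalE (I : finType) (P : pred I) (E : I -> R) (G : I -> GW) q :
  (\sum_(J | P J) E J *: G J) q = \sum_(J | P J) E J * G J q.
Proof. by rewrite fct_sumE. Qed.

Lemma key (E : Ft -> R) : (exists J, allS J && (E J != 0)) ->
  exists J0, [/\ allS J0, E J0 != 0,
    (forall J, allS J -> E J != 0 -> J = J0 \/ ltlex (oJ J0) (oJ J)),
    (\sum_(J | allS J) E J *: (Gf (bJ b J) : GW)) (oJ J0) = E J0 * Gf (bJ b J0) (oJ J0) &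
    (forall q, ltlex q (oJ J0) -> (\sum_(J | allS J) E J *: (Gf (bJ b J) : GW)) q = 0)].
Proof.
move=> [J1 hJ1].
pose s := [seq J <- enum Ft | allS J && (E J != 0)].
have [J0 J0s H0] : exists2 J0, J0 \in s & forall J, J \in s -> J = J0 \/ ltlex (oJ J0) (oJ J).
  apply: (list_min (@ltlex_trans m)).
    move=> x y; rewrite !mem_filter => /andP[/andP[hx _] _] /andP[/andP[hy _] _] nxy.
    apply: ltlex_total => e; case/eqP: nxy; exact: oJ_inj.
  apply/eqP => s0; have : J1 \in s by rewrite mem_filter hJ1 mem_enum.
  by rewrite s0.
move: J0s; rewrite mem_filter mem_enum andbT => /andP[aJ0 EJ0].
have H0' : forall J, allS J -> E J != 0 -> J = J0 \/ ltlex (oJ J0) (oJ J).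
  by move=> J aJ EJ; apply: H0; rewrite mem_filter mem_enum aJ EJ.
exists J0; split => //.
  rewrite sum_evalE (bigD1 J0) //= big1 ?addr0 // => J /andP[aJ nJ].
  have [EJ|EJ] := eqVneq (E J) 0; first by rewrite EJ mul0r.
  case: (H0' J aJ EJ) => [e|lt]; first by rewrite e eqxx in nJ.
  by rewrite (Gf_zero (p := oJ J)) ?mulr0 // => i x; exact: bJ_supp.
move=> q lq; rewrite sum_evalE big1 // => J aJ.
have [EJ|EJ] := eqVneq (E J) 0; first by rewrite EJ mul0r.
have lq' : ltlex q (oJ J).
  by case: (H0' J aJ EJ) => [->//|lt]; exact: ltlex_trans lq lt.
by rewrite (Gf_zero (p := oJ J)) ?mulr0 // => i x; exact: bJ_supp.
Qed.
End Key.

Section Prod.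
Variables (R : realType) (m : nat).
Local Notation F := (rat -> R).
Variables (bs : seq F) (os : seq rat) (bs' : seq F) (os' : seq rat).
Hypothesis hval : valid bs os.
Hypothesis hval' : valid bs' os'.

Lemma prod_lead (J : {ffun 'I_m -> option 'I_(size bs)}) (K : {ffun 'I_m -> option 'I_(size bs')}) :
  allS J -> allS K ->
  (forall q, ltlex q (oJ os J + oJ os' K) ->
     Gf (fun i => ps_mul (bJ (fun j : 'I_(size bs) => bs`_j) J i) (bJ (fun j : 'I_(size bs') => bs'`_j) K i)) q = 0) /\
  Gf (fun i => ps_mul (bJ (fun j : 'I_(size bs) => bs`_j) J i) (bJ (fun j : 'I_(size bs') => bs'`_j) K i)) (oJ os J + oJ os' K)
   = Gf (bJ (fun j : 'I_(size bs) => bs`_j) J) (oJ os J) * Gf (bJ (fun j : 'I_(size bs') => bs'`_j) K) (oJ os' K).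
Proof.
move=> hJ hK; split.
  move=> q; apply: Gf_zero => i x; rewrite addptE => hx.
  exact: (proj1 (mul_lead (bJ_lead hval i hJ) (bJ_lead hval' i hK))).
rewrite /Gf -big_split /=; apply: eq_bigr => i _; rewrite addptE.
exact: (proj2 (mul_lead (bJ_lead hval i hJ) (bJ_lead hval' i hK))).
Qed.
End Prod.

Section Tens.
Variables (R : realType) (m : nat).
Local Notation F := (rat -> R).
Local Notation GW := (('I_m -> rat) -> R^o).

Definition catc (a : R) n1 (c1 c2 : nat -> R) : nat -> R :=
  fun l => if (l < n1)%N then a * c1 l else c2 (l - n1)%N.
Definition catu n1 (u1 u2 : nat -> 'I_m -> F) : nat -> 'I_m -> F :=
  fun l => if (l < n1)%N then u1 l else u2 (l - n1)%N.

Lemma cat_sum (V : lmodType R) (Phi : ('I_m -> F) -> V) a n1 c1 u1 n2 c2 u2 :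
  \sum_(l < n1 + n2) catc a n1 c1 c2 l *: Phi (catu n1 u1 u2 l) =
  a *: \sum_(l < n1) c1 l *: Phi (u1 l) + \sum_(l < n2) c2 l *: Phi (u2 l).
Proof.
rewrite big_split_ord /=; congr (_ + _).
  rewrite scaler_sumr; apply: eq_bigr => l _; rewrite /catc /catu /= ltn_ord.
  by rewrite scalerA.
by apply: eq_bigr => l _; rewrite /catc /catu /= ltnNge leq_addr /= addKn.
Qed.

Lemma cat_puis n1 u1 n2 u2 :
  (forall l, (l < n1)%N -> all_puiseux (u1 l)) -> (forall l, (l < n2)%N -> all_puiseux (u2 l)) ->
  forall l, (l < n1 + n2)%N -> all_puiseux (catu n1 u1 u2 l).
Proof.
move=> h1 h2 l ll; rewrite /catu; case: ltnP => [/h1 //|hl]; apply: h2.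
by rewrite ltn_subLR.
Qed.

Definition spanG (Fn : GW) : Prop :=
  exists t : nat * (nat -> R) * (nat -> 'I_m -> F),
    (forall l, (l < t.1.1)%N -> all_puiseux (t.2 l)) /\
    Fn = \sum_(l < t.1.1) t.1.2 l *: (Gf (t.2 l) : GW).

Definition spanP : {pred GW} := fun Fn => `[< spanG Fn >].

Lemma spanP_closed : submod_closed spanP.
Proof.
split.
  apply/asboolP; exists (0%N, (fun _ => 0), (fun _ _ => 0)); split => //.
  by rewrite big_ord0.
move=> a u v /asboolP [[[n1 c1] u1] [h1 e1]] /asboolP [[[n2 c2] u2] [h2 e2]].
apply/asboolP; exists (n1 + n2, catc a n1 c1 c2, catu n1 u1 u2)%N; split.
  exact: cat_puis.
by rewrite /= cat_sum e1 e2.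
Qed.

HB.instance Definition _ := GRing.isSubmodClosed.Build R GW spanP spanP_closed.

Inductive V : predArgType := MkV (x : GW) of x \in spanP.
Definition vval (v : V) : GW := let: MkV x _ := v in x.
HB.instance Definition _ := [isSub of V for vval].
HB.instance Definition _ := [Choice of V by <:].
HB.instance Definition _ := [SubChoice_isSubZmodule of V by <:].
HB.instance Definition _ := [SubZmodule_isSubLmodule of V by <:].

Lemma vvalD (x y : V) : vval (x + y) = vval x + vval y. Proof. by []. Qed.
Lemma vvalZ a (x : V) : vval (a *: x) = a *: vval x. Proof. by []. Qed.
Lemma vvalN (x : V) : vval (- x) = - vval x. Proof. by []. Qed.
Lemma vval0 : vval 0 = 0. Proof. by []. Qed.

End Tens.

Section Tens2.
Variables (R : realType) (m : nat) (T : comAlgType R).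
Variable iota : ('I_m -> rat -> R) -> T.
Hypothesis htp : is_tensor_power iota.
Local Notation F := (rat -> R).
Local Notation GW := (('I_m -> rat) -> R^o).
Local Notation V := (V R m).

Lemma t1 (a : R) (G G' : GW) q : (a *: G + G') q = a * G q + G' q.
Proof. by []. Qed.
Lemma Gf_upd (u : 'I_m -> rat -> R) i h q :
  Gf (tuple_upd u i h) q = h (q i) * \prod_(j < m | j != i) u j (q j).
Proof.
rewrite /Gf (bigD1 i) //= /tuple_upd eqxx; congr (_ * _).
by apply: eq_bigr => j /negPf ->.
Qed.

Lemma Gf_ml : multilinear (fun u => (Gf u : GW)).
Proof.
move=> u i f g a hu hf hg.
apply/funext => q.
change (Gf (tuple_upd u i (ps_add (ps_scale a f) g)) q = (a *: (Gf (tuple_upd u i f) : GW) + (Gf (tuple_upd u i g) : GW)) q).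
rewrite (t1 a (Gf (tuple_upd u i f)) (Gf (tuple_upd u i g)) q) !Gf_upd /ps_add /ps_scale.
by rewrite mulrDl mulrA.
Qed.

Lemma iota_ml : multilinear iota.
Proof. by case: htp. Qed.

Definition phi0 (u : 'I_m -> F) : V := insubd (0 : V) (Gf u : GW).

Lemma Gf_span u : all_puiseux u -> (Gf u : GW) \in @spanP R m.
Proof.
move=> hu; apply/asboolP; exists (1%N, (fun _ => 1), (fun _ => u)); split => //.
by rewrite big_ord1 scale1r.
Qed.

Lemma val_phi0 u : all_puiseux u -> vval (phi0 u) = Gf u.
Proof. by move=> hu; rewrite /phi0 val_insubd Gf_span. Qed.

Lemma phi0_ml : multilinear phi0.
Proof.
move=> u i f g a hu hf hg; apply: (@val_inj _ _ V).
change (vval (phi0 (tuple_upd u i (ps_add (ps_scale a f) g))) = vval (a *: phi0 (tuple_upd u i f) + phi0 (tuple_upd u i g))).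
have h1 : all_puiseux (tuple_upd u i (ps_add (ps_scale a f) g)).
  by apply: upd_puis => //; apply: puisD => //; apply: puisZ.
have h2 : all_puiseux (tuple_upd u i f) by apply: upd_puis.
have h3 : all_puiseux (tuple_upd u i g) by apply: upd_puis.
rewrite vvalD vvalZ !val_phi0 //.
exact: Gf_ml.
Qed.

Lemma WD n (c : nat -> R) us : (forall l, (l < n)%N -> all_puiseux (us l)) ->
  \sum_(l < n) c l *: (Gf (us l) : GW) = 0 -> \sum_(l < n) c l *: iota (us l) = 0.
Proof.
move=> hus.
have [bs [os [hval [E hE]]]] := core_exp c hus.
rewrite (hE _ _ Gf_ml) (hE _ _ iota_ml) => H0.
have [[J hJ]|hn] := pselect (exists J, allS J && (E J != 0)); last first.
  rewrite big1 // => J aJ.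
  have [->|EJ] := eqVneq (E J) 0; first by rewrite scale0r.
  by case: hn; exists J; rewrite aJ EJ.
have [J0 [aJ0 EJ0 _ hv _]] := key hval (ex_intro _ J hJ).
have : (E J0 * Gf (bJ (fun j : 'I_(size bs) => bs`_j) J0) (oJ os J0)) != 0.
  by rewrite mulf_neq0 // GbJ_nz.
by rewrite -hv H0 eqxx.
Qed.

Lemma WD2 n (c : nat -> R) us n' (c' : nat -> R) us' :
  (forall l, (l < n)%N -> all_puiseux (us l)) ->
  (forall l, (l < n')%N -> all_puiseux (us' l)) ->
  \sum_(l < n) c l *: (Gf (us l) : GW) = \sum_(l < n') c' l *: (Gf (us' l) : GW) ->
  \sum_(l < n) c l *: iota (us l) = \sum_(l < n') c' l *: iota (us' l).
Proof.
move=> hus hus' e.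
have := @WD (n' + n) (catc (-1) n' c' c) (catu n' us' us) (cat_puis hus' hus).
rewrite !cat_sum e scaleN1r addNr => /(_ erefl) /eqP.
by rewrite scaleN1r addrC subr_eq0 => /eqP.
Qed.

Lemma rep_ex (x : V) : spanG (vval x).
Proof. by apply/asboolP; exact: (valP x). Qed.

Definition rep (x : V) := projT1 (cid (rep_ex x)).
Lemma repP (x : V) : (forall l, ((rep x).1.1 > l)%N -> all_puiseux ((rep x).2 l)) /\
   vval x = \sum_(l < (rep x).1.1) (rep x).1.2 l *: (Gf ((rep x).2 l) : GW).
Proof. exact: (projT2 (cid (rep_ex x))). Qed.

Definition hmap (x : V) : T := \sum_(l < (rep x).1.1) (rep x).1.2 l *: iota ((rep x).2 l).

Lemma hmap_lin : linear hmap.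
Proof.
move=> a x y; rewrite /hmap.
have [h1 e1] := repP x; have [h2 e2] := repP y; have [h3 e3] := repP (a *: x + y).
rewrite -cat_sum; apply: WD2 => //; first exact: cat_puis.
by rewrite cat_sum -e1 -e2 -e3.
Qed.

HB.instance Definition _ := GRing.isLinear.Build R V T *:%R hmap hmap_lin.

Definition hL : {linear V -> T} := hmap.

Lemma hL_phi0 u : all_puiseux u -> hL (phi0 u) = iota u.
Proof.
move=> hu; rewrite /hL /= /hmap.
have [h1 e1] := repP (phi0 u).
rewrite (WD2 (n' := 1%N) (c' := fun _ => 1) (us' := fun _ => u) h1 (fun _ _ => hu)).
  by rewrite big_ord1 scale1r.
by rewrite big_ord1 scale1r -e1 val_phi0.
Qed.

Lemma decomp (g : {linear T -> V}) : (forall x, hL (g x) = x) -> forall x,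
  exists bs os, valid bs os /\
  exists E : {ffun 'I_m -> option 'I_(size bs)} -> R,
    x = \sum_(J | allS J) E J *: iota (bJ (fun j : 'I_(size bs) => bs`_j) J) /\
    vval (g x) = \sum_(J | allS J) E J *: (Gf (bJ (fun j : 'I_(size bs) => bs`_j) J) : GW).
Proof.
move=> hid x; have [h1 e1] := repP (g x).
have [bs [os [hval [E hE]]]] := core_exp (rep (g x)).1.2 h1.
exists bs, os; split => //; exists E; split.
  by rewrite -{1}(hid x) /hL /= /hmap (hE _ _ iota_ml).
by rewrite e1 (hE _ _ Gf_ml).
Qed.

End Tens2.

Section Main.
Variables (R : realType) (m : nat) (T : comAlgType R).
Variable iota : ('I_m -> rat -> R) -> T.
Hypothesis htp : is_tensor_power iota.
Variable g : {linear T -> V R m}.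
Hypothesis hid : forall x, hL htp (g x) = x.
Hypothesis hg : forall u, all_puiseux u -> g (iota u) = phi0 u.
Local Notation GW := (('I_m -> rat) -> R^o).

Definition Qm (x : T) : Prop := lexpos (R := R) (vval (g x)).

Lemma vg_add x y : vval (g (x + y)) = vval (g x) + vval (g y).
Proof. by rewrite raddfD vvalD. Qed.
Lemma vg_opp x : vval (g (- x)) = - vval (g x).
Proof. by rewrite raddfN vvalN. Qed.
Lemma vg0 : vval (g 0) = 0.
Proof. by rewrite raddf0. Qed.

Lemma vval_sum (I : Type) (r : seq I) (P : pred I) (Fs : I -> V R m) :
  vval (\sum_(i <- r | P i) Fs i) = \sum_(i <- r | P i) vval (Fs i).
Proof. exact: (big_morph _ (@vvalD R m) (@vval0 R m)). Qed.

Lemma Qm_tri x : Qm x \/ x = 0 \/ Qm (- x).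
Proof.
have [bs [os [hval [E [ex eg]]]]] := decomp hid x.
have [[J hJ]|hn] := pselect (exists J, allS J && (E J != 0)); last first.
  right; left; rewrite ex big1 // => J aJ.
  have [->|EJ] := eqVneq (E J) 0; first by rewrite scale0r.
  by case: hn; exists J; rewrite aJ EJ.
have [J0 [aJ0 EJ0 _ hv hlow]] := key hval (ex_intro _ J hJ).
have anz : E J0 * Gf (bJ (fun j : 'I_(size bs) => bs`_j) J0) (oJ os J0) != 0.
  by rewrite mulf_neq0 // GbJ_nz.
case: (ltgtP 0 (E J0 * Gf (bJ (fun j : 'I_(size bs) => bs`_j) J0) (oJ os J0))) anz => // ha _.
  left; exists (oJ os J0); rewrite eg; split; first by rewrite hv.
  by move=> r hr; rewrite hlow.
right; right; exists (oJ os J0); rewrite vg_opp eg; split.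
  by rewrite foppE hv oppr_gt0.
by move=> r hr; rewrite foppE hlow // oppr0.
Qed.

Lemma Qm_not0 x : ~ (Qm x /\ x = 0).
Proof. by move=> [qx x0]; move: qx; rewrite /Qm x0 vg0 => /lexpos0. Qed.

Lemma Qm_notopp x : ~ (Qm x /\ Qm (- x)).
Proof. by move=> [qx qnx]; move: qnx; rewrite /Qm vg_opp => /(lexpos_opp qx). Qed.

Lemma Qm_add x y : Qm x -> Qm y -> Qm (x + y).
Proof. by rewrite /Qm vg_add; apply: lexpos_add. Qed.

Lemma valid_puis (bs : seq (rat -> R)) os : valid bs os -> forall j : 'I_(size bs), is_puiseux bs`_j.
Proof. by case=> _ _ hv j; exact: (proj1 (hv j (ltn_ord j))). Qed.

Lemma lead_part x : Qm x -> exists bs os, valid bs os /\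
  exists E : {ffun 'I_m -> option 'I_(size bs)} -> R,
    x = \sum_(J | allS J) E J *: iota (bJ (fun j : 'I_(size bs) => bs`_j) J) /\
  exists J0, [/\ allS J0, E J0 != 0,
    (forall J, allS J -> E J != 0 -> J = J0 \/ ltlex (oJ os J0) (oJ os J)) &
    0 < E J0 * Gf (bJ (fun j : 'I_(size bs) => bs`_j) J0) (oJ os J0)].
Proof.
move=> qx; have [bs [os [hval [E [ex eg]]]]] := decomp hid x.
exists bs, os; split => //; exists E; split => //.
have [[J hJ]|hn] := pselect (exists J, allS J && (E J != 0)); last first.
  move: qx; rewrite /Qm eg big1; first by move/lexpos0.
  move=> J aJ; have [->|EJ] := eqVneq (E J) 0; first by rewrite scale0r.
  by case: hn; exists J; rewrite aJ EJ.
have [J0 [aJ0 EJ0 H0 hv hlow]] := key hval (ex_intro _ J hJ).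
exists J0; split => //; rewrite -hv.
have := lexpos_lead (p := oJ os J0) qx; rewrite eg; apply.
  by rewrite hv mulf_neq0 // GbJ_nz.
by move=> r hr; rewrite hlow.
Qed.

Lemma Qm_mul x y : Qm x -> Qm y -> Qm (x * y).
Proof.
move=> /lead_part [bs [os [hval [E [ex [J0 [aJ0 EJ0 H0 pa]]]]]]].
move=> /lead_part [bs' [os' [hval' [E' [ey [K0 [aK0 EK0 H0' pb]]]]]]].
have hb := valid_puis hval; have hb' := valid_puis hval'.
have [mlI mulI _ _] := htp.
have exy : x * y = \sum_(J | allS J) \sum_(K | allS K) (E J * E' K) *:
    iota (fun i => ps_mul (bJ (fun j : 'I_(size bs) => bs`_j) J i) (bJ (fun j : 'I_(size bs') => bs'`_j) K i)).
  rewrite ex ey mulr_suml; apply: eq_bigr => J _; rewrite mulr_sumr; apply: eq_bigr => K _.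
  by rewrite -scalerAl -scalerAr scalerA mulI //; apply: bJ_puis.
have egxy : forall q, vval (g (x * y)) q = \sum_(J | allS J) \sum_(K | allS K) (E J * E' K) *
    Gf (fun i => ps_mul (bJ (fun j : 'I_(size bs) => bs`_j) J i) (bJ (fun j : 'I_(size bs') => bs'`_j) K i)) q.
  move=> q; rewrite exy linear_sum vval_sum fct_sumE; apply: eq_bigr => J _.
  rewrite linear_sum vval_sum fct_sumE; apply: eq_bigr => K _.
  rewrite linearZ vvalZ hg; last by move=> i; apply: puisM; apply: bJ_puis.
  by rewrite val_phi0 //; move=> i; apply: puisM; apply: bJ_puis.
pose s := oJ os J0 + oJ os' K0.
have lowJK : forall J K, allS J -> allS K -> E J != 0 -> E' K != 0 ->
    (J = J0 /\ K = K0) \/ ltlex s (oJ os J + oJ os' K).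
  move=> J K aJ aK EJ EK.
  case: (H0 J aJ EJ) => hJ; case: (H0' K aK EK) => hK.
  - by left.
  - by right; apply: ltlex_add; [left; rewrite hJ|right|right].
  - by right; apply: ltlex_add; [right|left; rewrite hK|left].
  - by right; apply: ltlex_add; [right|right|left].
have tz : forall J K q, allS J -> allS K -> (J = J0 /\ K = K0 -> ltlex q s) ->
    (ltlex s (oJ os J + oJ os' K) -> ltlex q (oJ os J + oJ os' K)) ->
    (E J * E' K) * Gf (fun i => ps_mul (bJ (fun j : 'I_(size bs) => bs`_j) J i) (bJ (fun j : 'I_(size bs') => bs'`_j) K i)) q = 0.
  move=> J K q aJ aK h1 h2.
  have [->|EJ] := eqVneq (E J) 0; first by rewrite !mul0r.
  have [->|EK] := eqVneq (E' K) 0; first by rewrite mulr0 mul0r.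
  rewrite (proj1 (prod_lead hval hval' aJ aK) q) ?mulr0 //.
  case: (lowJK J K aJ aK EJ EK) => [[eJ eK]|hl]; last exact: h2.
  by subst J K; exact: h1.
exists s; split.
  rewrite egxy (bigD1 J0) //= (bigD1 K0) //= big1 ?addr0; last first.
    move=> K /andP[aK nK]; apply: tz => //; first by move=> [_ eK]; rewrite eK eqxx in nK.
  rewrite big1 ?addr0; last first.
    move=> J /andP[aJ nJ]; apply: big1 => K aK; apply: tz => //.
    by move=> [eJ _]; rewrite eJ eqxx in nJ.
  rewrite (proj2 (prod_lead hval hval' aJ0 aK0)) mulrACA.
  exact: mulr_gt0.
move=> q hq; rewrite egxy big1 // => J aJ; rewrite big1 // => K aK.
apply: (tz J K q aJ aK); [move=> _; exact: hq | move=> h; exact: ltlex_trans hq h].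
Qed.

End Main.

Theorem mainTheorem8 (R : realType) (m : nat) (T : comAlgType R)
  (iota : ('I_m -> rat -> R) -> T) :
  is_tensor_power iota ->
  exists Qm : T -> Prop,
    is_ordering Qm /\
    (forall u : 'I_m -> rat -> R,
       (forall i, is_puiseux (u i) /\ posQ (u i)) -> Qm (iota u)).
Proof.
move=> htp; have [mlI mulI oneI univ] := htp.
have [[g hg] _] := univ _ _ (@phi0_ml R m).
have [_ uniqT] := univ _ _ mlI.
have hid : forall x, hL htp (g x) = x.
  apply: (uniqT (hL htp \o g) idfun) => u hu /=.
  by rewrite hg // hL_phi0.
exists (Qm g); split.
  split.
  - exact: (Qm_tri hid).
  - exact: Qm_not0.
  - exact: Qm_notopp.
  - exact: Qm_add.
  - exact: (Qm_mul hid hg).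
move=> u hu.
have hp : all_puiseux u by move=> i; exact: (proj1 (hu i)).
have [o ho] := choice (fun i => proj2 (hu i)).
rewrite /Qm hg // val_phi0 //; exists o; split.
  by rewrite /Gf; apply: prodr_gt0 => i _; exact: (proj1 (ho i)).
move=> r hr; apply: (Gf_zero (p := o)) => // i x hx; exact: (proj2 (ho i)).
Qed.
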